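(* Let $\Sigma$ be a finite alphabet, $n$ a positive integer, $u,v\in\Sigma^\star$, and $r\in R_n(u)\cap R_n(v)$. Let $i_1,i_2\in[1,|u|]$ and $j_1,j_2\in[1,|v|]$ with $\operatorname{ord}(i_1,r(u))\ne\operatorname{ord}(j_1,r(v))$. Then Samson has a winning strategy in the game $\mathrm{FO}^2_n((u,i_1,i_2),(v,j_1,j_2))$.
   Context: Game $\mathrm{FO}^2_n((u,i_1,i_2),(v,j_1,j_2))$: pebble pair $x$ starts on $i_1$ in $u$ and $j_1$ in $v$, pebble pair $y$ on $i_2$ in $u$ and $j_2$ in $v$. In each of $n$ rounds Samson picks $z\in\{x,y\}$ and places one $z$-pebble on a position of one of the words (either one); Delilah places the other $z$-pebble on a position of the other word. Samson wins if initially or after some round the map $x^u\mapsto x^v$, $y^u\mapsto y^v$ is not a partial isomorphism (pebbled letters differ, or $\operatorname{ord}(x^u,y^u)\ne\operatorname{ord}(x^v,y^v)$); otherwise Delilah wins. Boundary positions: $\triangleright_a(w)=\min\{i:w_i=a\}$, $\triangleleft_a(w)=\max\{i:w_i=a\}$, $\triangleright_a(w,q)=\min\{i\in[q+1,|w|]:w_i=a\}$, $\triangleleft_a(w,q)=\max\{i\in[1,q-1]:w_i=a\}$ (undefined if empty). An $n$-ranker is a sequence $r=(p_1,\dots,p_n)$ of boundary positions with $r(w)=p_1(w)$ if $n=1$, undefined if $(p_1,\dots,p_{n-1})(w)$ is undefined, else $p_n(w,(p_1,\dots,p_{n-1})(w))$. $R_n(w)$ is the set of $n$-rankers defined over $w$.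 $\operatorname{ord}(i,j)\in\{<,=,>\}$ is the order type of $i,j$. *)

(* Defs.v *)
From mathcomp Require Import all_boot.
Set Implicit Arguments. Unset Strict Implicit. Unset Printing Implicit Defensive.

Section Words.
Variable Sigma : finType.

(* Positions of a word are 1-indexed: w_i for i in [1, |w|]. *)
Definition letter (w : seq Sigma) (i : nat) : option Sigma :=
  nth None (map Some w) i.-1.

Definition valid_pos (w : seq Sigma) (i : nat) : Prop := 1 <= i <= size w.

Definition minpos (w : seq Sigma) (a : Sigma) (lo hi : nat) : option nat :=
  head None [seq Some i | i <- iota lo (hi.+1 - lo) & letter w i == Some a].
Definition maxpos (w : seq Sigma) (a : Sigma) (lo hi : nat) : option nat :=
  last None [seq Some i | i <- iota lo (hi.+1 - lo) & letter w i == Some a].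

(* A boundary position is (true, a) for |>_a and (false, a) for <|_a. *)
Definition bpos := (bool * Sigma)%type.

Definition bp_first (w : seq Sigma) (p : bpos) : option nat :=
  if p.1 then minpos w p.2 1 (size w) else maxpos w p.2 1 (size w).

Definition bp_from (w : seq Sigma) (p : bpos) (q : nat) : option nat :=
  if p.1 then minpos w p.2 q.+1 (size w) else maxpos w p.2 1 q.-1.

Definition ranker_eval (w : seq Sigma) (r : seq bpos) : option nat :=
  match r with
  | [::] => None
  | p :: ps => foldl (fun acc p' => obind (bp_from w p') acc) (bp_first w p) ps
  end.

Definition in_R (n : nat) (w : seq Sigma) (r : seq bpos) : Prop :=
  size r = n /\ ranker_eval w r <> None.

Definition ord (i j : nat) : comparison := Nat.compare i j.

Definition partial_iso (u v : seq Sigma) (xu yu xv yv : nat) : Prop :=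
  letter u xu = letter v xv /\ letter u yu = letter v yv /\
  ord xu yu = ord xv yv.

Fixpoint samson_wins (u v : seq Sigma) (k : nat) (xu yu xv yv : nat) : Prop :=
  ~ partial_iso u v xu yu xv yv \/
  match k with
  | 0 => False
  | k'.+1 =>
      (exists p, valid_pos u p /\
         forall q, valid_pos v q -> samson_wins u v k' p yu q yv) \/
      (exists p, valid_pos v p /\
         forall q, valid_pos u q -> samson_wins u v k' q yu p yv) \/
      (exists p, valid_pos u p /\
         forall q, valid_pos v q -> samson_wins u v k' xu p xv q) \/
      (exists p, valid_pos v p /\
         forall q, valid_pos u q -> samson_wins u v k' xu q xv p)
  end.

End Words.

(* Main.v *)
Require Import Defs.
From mathcomp Require Import all_boot.
From mathcomp Require Import zify.
From Stdlib Require Import PeanoNat.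
Set Implicit Arguments. Unset Strict Implicit.
Set Bullet Behavior "Strict Subproofs".

Section Aux.
Variable Sigma : finType.
Implicit Types u v w : seq Sigma.

Lemma ord_cases i j : ord i j = if i < j then Lt else if i == j then Eq else Gt.
Proof.
rewrite /ord; case: ltngtP => h.
- by apply/Nat.compare_lt_iff; apply/ltP.
- by apply/Nat.compare_gt_iff; apply/ltP.
- by subst; apply: Nat.compare_refl.
Qed.

Lemma swap_uv u v k a b c d :
  samson_wins u v k a b c d -> samson_wins v u k c d a b.
Proof.
elim: k a b c d => [|k IH] a b c d /=.
- case=> // h; left=> [[h1 [h2 h3]]]; apply: h; split=> //; split=> //.
- case=> [h|[[p [Vp H]]|[[p [Vp H]]|[[p [Vp H]]|[p [Vp H]]]]]].
  + left=> [[h1 [h2 h3]]]; apply: h; split=> //; split=> //.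
  + right; right; left; exists p; split=> // q Vq; exact: IH (H q Vq).
  + right; left; exists p; split=> // q Vq; exact: IH (H q Vq).
  + right; right; right; right; exists p; split=> // q Vq; exact: IH (H q Vq).
  + right; right; right; left; exists p; split=> // q Vq; exact: IH (H q Vq).
Qed.

Lemma ord_sym i j : ord j i = CompOpp (ord i j).
Proof. by rewrite /ord Nat.compare_antisym. Qed.

Lemma swap_xy u v k a b c d :
  samson_wins u v k a b c d -> samson_wins u v k b a d c.
Proof.
elim: k a b c d => [|k IH] a b c d /=.
- case=> // h; left=> [[h1 [h2 h3]]]; apply: h; split=> //; split=> //.
  by rewrite ord_sym h3 -ord_sym.
- case=> [h|[[p [Vp H]]|[[p [Vp H]]|[[p [Vp H]]|[p [Vp H]]]]]].
  + left=> [[h1 [h2 h3]]]; apply: h; split=> //; split=> //.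
    by rewrite ord_sym h3 -ord_sym.
  + right; right; right; left; exists p; split=> // q Vq; exact: IH (H q Vq).
  + right; right; right; right; exists p; split=> // q Vq; exact: IH (H q Vq).
  + right; left; exists p; split=> // q Vq; exact: IH (H q Vq).
  + right; right; left; exists p; split=> // q Vq; exact: IH (H q Vq).
Qed.

Lemma win_noiso u v k a b c d :
  ~ partial_iso u v a b c d -> samson_wins u v k a b c d.
Proof. by case: k => [|k] h; left. Qed.

Definition crank (c : comparison) : nat :=
  match c with Lt => 0 | Eq => 1 | Gt => 2 end.

Lemma core_fwd u v k a i1 i2 j1 j2 su sv ru :
  valid_pos v sv -> letter v sv = Some a ->
  (forall q, ru < q < su -> letter u q <> Some a) ->
  (forall q, valid_pos u q -> q <= ru -> samson_wins u v k i1 q j1 sv) ->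
  crank (ord i1 su) < crank (ord j1 sv) -> samson_wins u v k.+1 i1 i2 j1 j2.
Proof.
move=> Vsv Lsv gap H Hc /=; right; right; right; right.
exists sv; split=> // q Vq.
have [Hle|Hgt] := leqP q ru; first by apply: H.
apply: win_noiso => [[_ [Hl Ho]]].
rewrite -Ho in Hc.
have Hq : q < su.
  move: Hc; rewrite !ord_cases.
  by case: (ltngtP i1 su) => h1; case: (ltngtP i1 q) => h2 //= _; lia.
apply: (gap q); first by rewrite Hgt Hq.
by rewrite Hl.
Qed.

Lemma core_bwd u v k a i1 i2 j1 j2 su sv ru :
  valid_pos v sv -> letter v sv = Some a ->
  (forall q, su < q < ru -> letter u q <> Some a) ->
  (forall q, valid_pos u q -> ru <= q -> samson_wins u v k i1 q j1 sv) ->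
  crank (ord j1 sv) < crank (ord i1 su) -> samson_wins u v k.+1 i1 i2 j1 j2.
Proof.
move=> Vsv Lsv gap H Hc /=; right; right; right; right.
exists sv; split=> // q Vq.
have [Hle|Hgt] := leqP ru q; first by apply: H.
apply: win_noiso => [[_ [Hl Ho]]].
rewrite -Ho in Hc.
have Hq : su < q.
  move: Hc; rewrite !ord_cases.
  by case: (ltngtP i1 su) => h1; case: (ltngtP i1 q) => h2 //= _; lia.
apply: (gap q); first by rewrite Hgt Hq.
by rewrite Hl.
Qed.

Lemma crank_neq c1 c2 : c1 <> c2 -> crank c1 != crank c2.
Proof. by case: c1; case: c2. Qed.

Lemma gen_fwd u v k a i1 i2 j1 j2 su sv ru rv :
  valid_pos u su -> valid_pos v sv -> letter u su = Some a -> letter v sv = Some a ->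
  (forall q, ru < q < su -> letter u q <> Some a) ->
  (forall q, rv < q < sv -> letter v q <> Some a) ->
  (forall q, valid_pos u q -> q <= ru -> samson_wins u v k i1 q j1 sv) ->
  (forall q, valid_pos v q -> q <= rv -> samson_wins u v k i1 su j1 q) ->
  ord i1 su <> ord j1 sv -> samson_wins u v k.+1 i1 i2 j1 j2.
Proof.
move=> Vsu Vsv Lsu Lsv gu gv Hu Hv /crank_neq.
case: ltngtP => // h _.
- exact: core_fwd Vsv Lsv gu Hu h.
- apply: swap_uv; apply: (@core_fwd v u k a j1 j2 i1 i2 sv su rv Vsu Lsu gv _ h).
  by move=> q Vq Hq; apply: swap_uv; apply: Hv.
Qed.

Lemma gen_bwd u v k a i1 i2 j1 j2 su sv ru rv :
  valid_pos u su -> valid_pos v sv -> letter u su = Some a -> letter v sv = Some a ->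
  (forall q, su < q < ru -> letter u q <> Some a) ->
  (forall q, sv < q < rv -> letter v q <> Some a) ->
  (forall q, valid_pos u q -> ru <= q -> samson_wins u v k i1 q j1 sv) ->
  (forall q, valid_pos v q -> rv <= q -> samson_wins u v k i1 su j1 q) ->
  ord i1 su <> ord j1 sv -> samson_wins u v k.+1 i1 i2 j1 j2.
Proof.
move=> Vsu Vsv Lsu Lsv gu gv Hu Hv /crank_neq.
case: ltngtP => // h _.
- apply: swap_uv; apply: (@core_bwd v u k a j1 j2 i1 i2 sv su rv Vsu Lsu gv _ h).
  by move=> q Vq Hq; apply: swap_uv; apply: Hv.
- exact: core_bwd Vsv Lsv gu Hu h.
Qed.

Lemma head_filter_iota (P : pred nat) n lo s :
  head None [seq Some i | i <- iota lo n & P i] = Some s ->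
  lo <= s < lo + n /\ P s /\ forall x, lo <= x < s -> ~~ P x.
Proof.
elim: n lo => [|n IH] lo //=.
case: ifP => Plo /=.
- case=> <-; split; first lia. split=> // x; lia.
- move/IH=> [h1 [h2 h3]]; split; first lia. split=> // x hx.
  have [->|ne] := eqVneq x lo; first by rewrite Plo.
  apply: h3; lia.
Qed.

Lemma last_filter_iota (P : pred nat) n lo s :
  last None [seq Some i | i <- iota lo n & P i] = Some s ->
  lo <= s < lo + n /\ P s /\ forall x, s < x < lo + n -> ~~ P x.
Proof.
elim: n => [|n IH]; first by [].
rewrite -[n.+1]addn1 iotaD filter_cat map_cat last_cat /=.
case: ifP => P1 /=.
- case=> <-; split; first lia. split=> // x; lia.
- move/IH=> [h1 [h2 h3]]; split; first lia. split=> // x hx.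
  have [->|ne] := eqVneq x (lo + n); first by rewrite P1.
  apply: h3; lia.
Qed.

Lemma letter_some w i a : letter w i = Some a -> i.-1 < size w.
Proof.
rewrite /letter; case: ltnP => // h.
by rewrite nth_default // size_map.
Qed.

Lemma minpos_spec w a lo hi s : 0 < lo -> minpos w a lo hi = Some s ->
  [/\ valid_pos w s, lo <= s <= hi, letter w s = Some a &
      forall x, lo <= x < s -> letter w x <> Some a].
Proof.
move=> Hlo /head_filter_iota [h1 [/eqP h2 h3]].
have := letter_some h2 => hs.
split=> //; first (rewrite /valid_pos; lia); first lia.
by move=> x /h3 /eqP.
Qed.

Lemma maxpos_spec w a lo hi s : 0 < lo -> maxpos w a lo hi = Some s ->
  [/\ valid_pos w s, lo <= s <= hi, letter w s = Some a &
      forall x, s < x <= hi -> letter w x <> Some a].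
Proof.
move=> Hlo /last_filter_iota [h1 [/eqP h2 h3]].
have := letter_some h2 => hs.
split=> //; first (rewrite /valid_pos; lia); first lia.
move=> x hx; apply/eqP; apply: h3; lia.
Qed.

Lemma ranker_eval_rcons w r p : r != [::] ->
  ranker_eval w (rcons r p) = obind (bp_from w p) (ranker_eval w r).
Proof. by case: r => // x r _ /=; rewrite foldl_rcons. Qed.

Ltac ordsolve := rewrite !ord_cases;
  repeat match goal with |- context [?x < ?y] => case: (ltngtP x y) => ? end;
  simpl; try discriminate; lia.

Lemma main_ind (r : seq (bool * Sigma)) : r != [::] ->
  forall u v ru rv i1 i2 j1 j2,
  ranker_eval u r = Some ru -> ranker_eval v r = Some rv ->
  ord i1 ru <> ord j1 rv -> samson_wins u v (size r) i1 i2 j1 j2.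
Proof.
elim/last_ind: r => // r p IH _ u v ru rv i1 i2 j1 j2.
rewrite size_rcons.
have [->|rn] := eqVneq r [::].
- move=> Eu Ev Ho; case: p Eu Ev => [[] a] Eu Ev; rewrite /= /bp_first /= in Eu Ev.
  + have [Vu _ Lu gu] := minpos_spec (isT : 0 < 1) Eu.
    have [Vv _ Lv gv] := minpos_spec (isT : 0 < 1) Ev.
    apply: (@gen_fwd u v 0 a i1 i2 j1 j2 ru rv 0 0 Vu Vv Lu Lv) => //.
    all: try (by move=> q hq; apply: (gu q); lia).
    all: try (by move=> q hq; apply: (gv q); lia).
    all: by rewrite /valid_pos => q; lia.
  + have [Vu _ Lu gu] := maxpos_spec (isT : 0 < 1) Eu.
    have [Vv _ Lv gv] := maxpos_spec (isT : 0 < 1) Ev.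
    apply: (@gen_bwd u v 0 a i1 i2 j1 j2 ru rv (size u).+1 (size v).+1 Vu Vv Lu Lv) => //.
    all: try (by move=> q hq; apply: (gu q); lia).
    all: try (by move=> q hq; apply: (gv q); lia).
    all: by rewrite /valid_pos => q; lia.
- rewrite !ranker_eval_rcons //.
  case Eu': (ranker_eval u r) => [ru'|]; last by move=> /= H; discriminate H.
  case Ev': (ranker_eval v r) => [rv'|]; last by move=> _ /= H; discriminate H.
  move=> Eu Ev Ho; case: p Eu Ev => [[] a] Eu Ev; rewrite /= /bp_from /= in Eu Ev.
  + have [Vu Bu Lu gu] := minpos_spec (isT : 0 < ru'.+1) Eu.
    have [Vv Bv Lv gv] := minpos_spec (isT : 0 < rv'.+1) Ev.
    apply: (@gen_fwd u v (size r) a i1 i2 j1 j2 ru rv ru' rv' Vu Vv Lu Lv) => //.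
    all: try (by move=> q hq; apply: (gu q); lia).
    all: try (by move=> q hq; apply: (gv q); lia).
    all: move=> q Vq hq; apply: swap_xy; apply: (IH rn _ _ _ _ _ _ _ _ Eu' Ev').
    all: ordsolve.
  + have [Vu Bu Lu gu] := maxpos_spec (isT : 0 < 1) Eu.
    have [Vv Bv Lv gv] := maxpos_spec (isT : 0 < 1) Ev.
    apply: (@gen_bwd u v (size r) a i1 i2 j1 j2 ru rv ru' rv' Vu Vv Lu Lv) => //.
    all: try (by move=> q hq; apply: (gu q); lia).
    all: try (by move=> q hq; apply: (gv q); lia).
    all: move=> q Vq hq; apply: swap_xy; apply: (IH rn _ _ _ _ _ _ _ _ Eu' Ev').
    all: ordsolve.
Qed.

End Aux.

Theorem lemma3p5 (Sigma : finType) (n : nat) (u v : seq Sigma)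
    (r : seq (bool * Sigma)) (i1 i2 j1 j2 : nat) :
  0 < n ->
  in_R n u r -> in_R n v r ->
  valid_pos u i1 -> valid_pos u i2 ->
  valid_pos v j1 -> valid_pos v j2 ->
  ord i1 (odflt 0 (ranker_eval u r)) <> ord j1 (odflt 0 (ranker_eval v r)) ->
  samson_wins u v n i1 i2 j1 j2.
Proof.
move=> n0 [sz Eu] [_ Ev] _ _ _ _.
case Hu: (ranker_eval u r) Eu => [ru|] // _.
case Hv: (ranker_eval v r) Ev => [rv|] // _ /= Ho.
have rn : r != [::] by rewrite -size_eq0 sz -lt0n.
rewrite -sz; exact: (main_ind rn i2 j2 Hu Hv Ho).
Qed.
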